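(* Let $1\leqslant k\leqslant n$, and let $P_{n,k}$ be the subgraph of $P_n$ induced by all permutations $\pi$ with $\pi_1\in\{1,\ldots,k\}$. Then: (a) the map $f_{n,k}$ from the vertices of $P_{n,k}$ to those of $P_k$, obtained by deleting from $\pi$ all entries not in $\{1,\ldots,k\}$, is a graph homomorphism $P_{n,k}\to P_k$; (b) $\chi(P_{n,k})=\chi(P_k)$.
   Context: For $n\geqslant 1$, the Pancake graph $P_n$ is the Cayley graph on the symmetric group $\mathrm{Sym}_n$, with permutations written in one-line notation $\pi=[\pi_1\pi_2\ldots\pi_n]$. Its generating set consists of the prefix-reversals $r_i$, $2\leqslant i\leqslant n$. Multiplying $\pi$ on the right by $r_i$ reverses the first $i$ entries: $\pi r_i=[\pi_i\pi_{i-1}\ldots\pi_1\pi_{i+1}\ldots\pi_n]$. Two vertices $\pi,\sigma$ are adjacent iff $\sigma=\pi r_i$ for some $2\leqslant i\leqslant n$. $\chi$ denotes the chromatic number. *)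

(* Defs.v *)
From mathcomp Require Import all_boot all_order all_fingroup.
Set Implicit Arguments. Unset Strict Implicit. Unset Printing Implicit Defensive.

(* One-line notation of s : 'S_n, with 1-based values: [s_1 ... s_n]. *)
Definition oneline (n : nat) (s : 'S_n) : seq nat := [seq (s j).+1 | j <- enum 'I_n].

Definition flip (i : nat) (w : seq nat) : seq nat := rev (take i w) ++ drop i w.

Definition pancake_adj (w u : seq nat) : bool :=
  [exists i : 'I_(size w).+1, (1 < i) && (u == flip i w)].

Definition pancake_rel (n : nat) : rel 'S_n :=
  fun s t => pancake_adj (oneline s) (oneline t).

Definition Pnk_vert (n k : nat) (s : 'S_n) : bool :=
  (0 < head 0 (oneline s) <= k).

Arguments Pnk_vert : clear implicits.
Definition Pnk_type (n k : nat) := {s : 'S_n | Pnk_vert n k s}.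

Definition Pnk_rel (n k : nat) : rel (Pnk_type n k) :=
  fun x y => pancake_rel (val x) (val y).

Definition fdel (k : nat) (w : seq nat) : seq nat := [seq x <- w | 0 < x <= k].

Definition colorable (T : finType) (e : rel T) (c : nat) : bool :=
  [exists f : {ffun T -> 'I_c}, [forall x, forall y, e x y ==> (f x != f y)]].

Definition chi (T : finType) (e : rel T) : nat :=
  find (colorable e) (iota 0 #|T|.+1).

(* Main.v *)
Require Import Defs.
From mathcomp Require Import all_boot all_order all_fingroup.
Set Implicit Arguments. Unset Strict Implicit.

Lemma head_flip i (w : seq nat) : 0 < i <= size w -> head 0 (flip i w) = nth 0 w i.-1.
Proof.
move=> /andP[i0 iw]; rewrite -nth0 /flip nth_cat size_rev size_takel //.
rewrite i0 nth_rev ?size_takel //.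
by rewrite nth_take ?subn1 // prednK.
Qed.

Lemma flip_cat i (a b : seq nat) : i <= size a -> flip i (a ++ b) = flip i a ++ b.
Proof.
move=> ia; rewrite /flip takel_cat // drop_cat -catA.
case: ltngtP ia => // ->.
by rewrite subnn drop0 drop_size.
Qed.

Lemma flip_filter (p : pred nat) (w : seq nat) i :
  1 < i <= size w -> p (head 0 w) -> p (head 0 (flip i w)) ->
  pancake_adj (filter p w) (filter p (flip i w)).
Proof.
move=> /andP[i1 iw] pa pb.
have hf := head_flip (i:=i) (w:=w); rewrite hf in pb; last by rewrite (ltnW i1).
have j1 : 1 < count p (take i w).
  clear hf; case: w iw pa pb => [|a w'] /= iw pa pb.
    by move: (leq_trans i1 iw).
  case: i i1 iw pb => [|i'] // i1 iw pb /=.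
  have {}pb : p (nth 0 w' i'.-1) by case: i' i1 iw pb.
  rewrite pa add1n ltnS -has_count; apply/hasP; exists (nth 0 w' i'.-1) => //.
  rewrite -(nth_take 0 (n0:=i')); last by rewrite prednK.
  by apply: mem_nth; rewrite size_takel // prednK.
set j := count p (take i w).
have jw : j < (size (filter p w)).+1.
  by rewrite ltnS size_filter -{1}(cat_take_drop i w) count_cat leq_addr.
apply/existsP; exists (Ordinal jw); rewrite /= j1 /=.
apply/eqP; rewrite /flip filter_cat filter_rev.
have -> : filter p w = filter p (take i w) ++ filter p (drop i w) by rewrite -filter_cat cat_take_drop.
by rewrite take_size_cat ?size_filter // drop_size_cat ?size_filter.
Qed.

Lemma flip_irr (w : seq nat) : uniq w -> ~~ pancake_adj w w.
Proof.
move=> uw; apply/existsP => -[i /andP[i1 /eqP e]].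
have := head_flip (i:=i) (w:=w); rewrite -e -nth0 => h.
have iw : i <= size w by rewrite -ltnS.
move: (h); rewrite (ltnW i1) iw => /(_ isT) /eqP; rewrite nth_uniq //.
- by case: (nat_of_ord i) i1 => [|[|]].
- by rewrite (leq_trans _ iw) // (ltnW i1).
- by rewrite (leq_trans _ iw) // prednK // (ltnW i1).
Qed.

Lemma oneline_uniq n (s : 'S_n) : uniq (oneline s).
Proof.
rewrite map_inj_uniq ?enum_uniq // => x y /eqP; rewrite eqSS => /eqP /val_inj.
exact: perm_inj.
Qed.

Lemma oneline_size n (s : 'S_n) : size (oneline s) = n.
Proof. by rewrite size_map size_enum_ord. Qed.

Lemma oneline_all n (s : 'S_n) : all (fun x => 0 < x <= n) (oneline s).
Proof. by apply/allP => x /mapP[j _ ->] /=. Qed.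

Lemma mk_perm n (w : seq nat) : uniq w -> size w = n -> all (fun x => 0 < x <= n) w ->
  exists s : 'S_n, oneline s = w.
Proof.
move=> uw sw aw.
have hb : forall j : 'I_n, 0 < nth 0 w j <= n.
  move=> j; apply: (allP aw); apply: mem_nth; by rewrite sw.
pose f (j : 'I_n) : 'I_n := insubd j (nth 0 w j).-1.
have fE : forall j, val (f j) = (nth 0 w j).-1.
  move=> j; rewrite insubdK //; have /andP[h1 h2] := hb j.
  by rewrite unfold_in /= prednK.
have finj : injective f.
  move=> x y /(congr1 val); rewrite !fE => e.
  have : nth 0 w x = nth 0 w y.
    have /andP[hx _] := hb x; have /andP[hy _] := hb y.
    by rewrite -(prednK hx) -(prednK hy) e.
  move/eqP; rewrite nth_uniq ?sw // => /eqP; exact: val_inj.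
exists (perm finj); rewrite /oneline.
rewrite (eq_map (g := fun j : 'I_n => nth 0 w (val j))); last first.
  by move=> j; rewrite permE fE prednK //; have /andP[] := hb j.
by rewrite (map_comp (nth 0 w) val) val_enum_ord -{1}sw; exact: mkseq_nth.
Qed.

Lemma chi_le (T : finType) (e : rel T) c : colorable e c -> chi e <= c.
Proof.
move=> hc; rewrite /chi; case: (ltnP c #|T|.+1) => h.
  rewrite leqNgt; apply/negP => lt.
  by have := before_find 0 lt; rewrite nth_iota // add0n hc.
by apply: leq_trans h; rewrite -[X in _ <= X](size_iota 0) find_size.
Qed.

Lemma chi_col (T : finType) (e : rel T) : irreflexive e -> colorable e (chi e).
Proof.
move=> irr.
have hc : colorable e #|T|.
  apply/existsP; exists [ffun x => enum_rank x]; apply/forallP => x; apply/forallP => y.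
  apply/implyP => exy; rewrite !ffunE; apply: contraTneq exy => /enum_rank_inj ->.
  by rewrite irr.
have hh : has (colorable e) (iota 0 #|T|.+1).
  apply/hasP; exists (#|T|); last exact: hc. by rewrite mem_iota add0n leqnn.
have hl : find (colorable e) (iota 0 #|T|.+1) < #|T|.+1.
  by rewrite -[X in _ < X](size_iota 0) -has_find.
have := nth_find 0 hh; rewrite nth_iota // add0n.
Qed.

Lemma chi_hom (T1 T2 : finType) (e1 : rel T1) (e2 : rel T2) (h : T1 -> T2) :
  irreflexive e2 -> (forall x y, e1 x y -> e2 (h x) (h y)) -> chi e1 <= chi e2.
Proof.
move=> irr hh; apply: chi_le; have /existsP[f /forallP hf] := chi_col irr.
apply/existsP; exists [ffun x => f (h x)]; apply/forallP => x; apply/forallP => y.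
apply/implyP => exy; rewrite !ffunE.
by have /forallP/(_ (h y))/implyP := hf (h x); apply; apply: hh.
Qed.

Lemma count_oneline n k (s : 'S_n) : k <= n -> count (fun x => 0 < x <= k) (oneline s) = k.
Proof.
move=> kn.
have sub : {subset oneline s <= iota 1 n}.
  move=> x hx; have /andP[h1 h2] := allP (oneline_all s) x hx.
  by rewrite mem_iota h1 add1n ltnS.
have [_ eqi] : ((size (oneline s) = size (iota 1 n)) * (oneline s =i iota 1 n))%type.
  by apply: uniq_min_size (oneline_uniq s) sub _; rewrite size_iota oneline_size.
rewrite ((seq.permP (uniq_perm (oneline_uniq s) (iota_uniq 1 n) eqi)) (fun x => 0 < x <= k)).
rewrite -(subnKC kn) iotaD count_cat.
rewrite (eq_in_count (a2 := predT)); last by move=> x; rewrite mem_iota => /andP[-> h]; rewrite -ltnS -add1n.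
rewrite count_predT size_iota (eq_in_count (a2 := pred0)) ?count_pred0 ?addn0 //.
move=> x; rewrite mem_iota => /andP[h _]; apply/negbTE/negP => /andP[_ hk].
by move: (leq_trans h hk); rewrite add1n ltnn.
Qed.

Lemma part_a1 n k (s : 'S_n) : k <= n -> exists t : 'S_k, oneline t = fdel k (oneline s).
Proof.
move=> kn; apply: mk_perm.
- exact/filter_uniq/oneline_uniq.
- by rewrite size_filter count_oneline.
- by apply/allP => x; rewrite mem_filter => /andP[].
Qed.

Lemma part_a2 n k (s t : 'S_n) : Pnk_vert n k s -> Pnk_vert n k t -> pancake_rel s t ->
     pancake_adj (fdel k (oneline s)) (fdel k (oneline t)).
Proof.
move=> ps pt /existsP[i /andP[i1 /eqP e]].
rewrite /fdel e; apply: flip_filter => //.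
- by rewrite i1 /= -ltnS ltn_ord.
- by rewrite -e.
Qed.

Definition ext_word n k (t : 'S_k) := oneline t ++ iota k.+1 (n - k).

Lemma part_ext n k (t : 'S_k) : k <= n -> exists s : 'S_n, oneline s = ext_word n t.
Proof.
move=> kn; apply: mk_perm.
- rewrite cat_uniq oneline_uniq iota_uniq andbT /=; apply/hasP => -[x].
  rewrite mem_iota => /andP[h _] hx; have /andP[_ h2] := allP (oneline_all t) x hx.
  by move: (leq_trans h h2); rewrite ltnn.
- by rewrite size_cat oneline_size size_iota subnKC.
- rewrite all_cat; apply/andP; split.
    apply/allP => x hx; have /andP[-> h2] := allP (oneline_all t) x hx.
    exact: leq_trans h2 kn.
  apply/allP => x; rewrite mem_iota => /andP[h1 h2]; rewrite (leq_trans _ h1) //=.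
  by rewrite -ltnS -(subnKC kn) -addSn.
Qed.

Lemma ext_vert n k (t : 'S_k) (s : 'S_n) : 1 <= k -> oneline s = ext_word n t -> Pnk_vert n k s.
Proof.
move=> k1 e; rewrite /Pnk_vert e /ext_word.
have : oneline t != [::] by rewrite -size_eq0 oneline_size -lt0n.
case E: (oneline t) => [|a r] // _ /=.
by apply: (allP (oneline_all t)); rewrite E mem_head.
Qed.

Lemma ext_adj n k (t t' : 'S_k) : pancake_rel t t' ->
  pancake_adj (ext_word n t) (ext_word n t').
Proof.
move=> /existsP[i /andP[i1 /eqP e]].
have il : i < (size (ext_word n t)).+1.
  by rewrite ltnS /ext_word size_cat (leq_trans _ (leq_addr _ _)) // -ltnS.
apply/existsP; exists (Ordinal il); rewrite /= i1 /= /ext_word e flip_cat //.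
by rewrite -ltnS.
Qed.
Theorem mainTheorem3 (n k : nat) (hk : 1 <= k) (hkn : k <= n) :
  (forall s : 'S_n, Pnk_vert n k s -> exists t : 'S_k, oneline t = fdel k (oneline s)) /\
  (forall s t : 'S_n, Pnk_vert n k s -> Pnk_vert n k t -> pancake_rel s t ->
     pancake_adj (fdel k (oneline s)) (fdel k (oneline t))) /\
  chi (@Pnk_rel n k) = chi (@pancake_rel k).
Proof.
split; first by move=> s _; exact: part_a1.
split; first exact: part_a2.
have irrP : forall m, irreflexive (@pancake_rel m).
  by move=> m s; apply/negbTE/flip_irr/oneline_uniq.
apply/eqP; rewrite eqn_leq; apply/andP; split.
- have H1 : forall x : Pnk_type n k, {t : 'S_k | oneline t == fdel k (oneline (val x))}.
    by move=> x; apply: sigW; have [t e] := part_a1 (val x) hkn; exists t; apply/eqP.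
  apply: (chi_hom (h := fun x => sval (H1 x)) (irrP k)) => x y exy.
  rewrite /pancake_rel (eqP (svalP (H1 x))) (eqP (svalP (H1 y))).
  exact: part_a2 (valP x) (valP y) exy.
- have H2 : forall t : 'S_k, {s : 'S_n | oneline s == ext_word n t}.
    by move=> t; apply: sigW; have [s e] := part_ext t hkn; exists s; apply/eqP.
  have V : forall t, Pnk_vert n k (sval (H2 t)).
    by move=> t; apply: ext_vert hk (eqP (svalP (H2 t))).
  apply: (chi_hom (h := fun t => exist _ (sval (H2 t)) (V t))).
    by move=> x; apply: irrP.
  move=> x y exy; rewrite /Pnk_rel /= /pancake_rel.
  by rewrite (eqP (svalP (H2 x))) (eqP (svalP (H2 y))); apply: ext_adj.
Qed.
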